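(* Let $d$ be a positive integer, $d < q \le \infty$, and let $p = q/(q-d)$ (with $p=1$ if $q=\infty$). Let $\mathbf{a} = (a_j)_{j=1}^\infty\in\ell^p$ and $M>0$. Let $X_{q,M} = \{\mathbf{x}\in\ell^q : \|\mathbf{x}\|_q\le M\}$, viewed as a subspace of $\Omega$, where $\Omega = \prod_{j=1}^\infty[-M,M]$ in the real case and $\Omega=\prod_{j=1}^\infty\{x\in\mathbb{C}:|x|\le M\}$ in the complex case, with the product topology. Then the function $f_d$ on $X_{q,M}$ defined by \[ f_d(\mathbf{x}) = (\mathbf{a},\mathbf{x}^d) = \sum_{j=1}^\infty a_j x_j^d \] is continuous with respect to the subspace topology on $X_{q,M}$ induced by the product topology on $\Omega$.
   Context: $\ell^p$ ($1\le p<\infty$) denotes sequences with $\|\mathbf{a}\|_p=(\sum_j|a_j|^p)^{1/p}<\infty$, and $\ell^\infty$ bounded sequences with the sup norm. Sequences and coefficients are real in the real case and complex in the complex case. The series defining $f_d$ converges absolutely by Hölder's inequality since $\mathbf{x}^d=(x_j^d)\in\ell^{q/d}$ and $(p,q/d)$ is a conjugate pair. *)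

(* Defs.v *)
From mathcomp Require Import all_boot all_order all_algebra.
From mathcomp Require Import all_classical all_reals all_analysis.
From mathcomp Require Import complex.
Import Order.TTheory GRing.Theory Num.Theory.
Import numFieldNormedType.Exports.

Set Implicit Arguments.
Unset Strict Implicit.
Unset Printing Implicit Defensive.

Local Open Scope ring_scope.

Notation Cplx R := (complex.complex R).
Notation cmod := (@complex.ComplexField.Normc.normc _).

Section lp.
Context {R : realType}.

(* The l^q (quasi)norm, q in (0, +oo], of a sequence through the moduli
   nx j = |x_j| >= 0, as an extended real (= +oo iff x is not in l^q):
   q finite:  (sum_j |x_j|^q)^(1/q);   q = +oo:  sup_j |x_j|.
   (q = -oo is junk and never used.) *)
Definition lnorm (q : \bar R) (nx : nat -> R) : \bar R :=
  match q with
  | EFin r => poweR (\sum_(0 <= j <oo) ((nx j) `^ r)%:E)%E r^-1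
  | +oo%E => ereal_sup (range (fun j => (nx j)%:E))
  | -oo%E => 0%E
  end.

Definition conj_exp (d : nat) (q : \bar R) : R :=
  match q with
  | EFin r => r / (r - d%:R)
  | _ => 1
  end.

Definition Xqm {K : numFieldType} (nrm : K -> R) (q : \bar R) (M : R)
  : set {ptws nat -> K} :=
  [set x | (lnorm q (fun j => nrm (x j)) <= M%:E)%E].

Definition fd {K : numFieldType} (d : nat) (a : nat -> K)
  : {ptws nat -> K} -> K :=
  fun x => limn (series (fun j => a j * x j ^+ d)).

End lp.

(* Main.v *)
Require Import Defs.
From mathcomp Require Import all_boot all_order all_algebra.
From mathcomp Require Import all_classical all_reals all_analysis.
From mathcomp Require Import complex.
From mathcomp.algebra_tactics Require Import ring lra.
Import Order.TTheory GRing.Theory Num.Theory.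
Import numFieldNormedType.Exports.
Local Open Scope classical_set_scope.
Local Open Scope ring_scope.
Section T. Variable R : realType.
Lemma tail_small (u : nat -> R) : (forall j, 0 <= u j) -> cvgn (series u) ->
  forall e, 0 < e -> exists N, forall n m, (N <= n)%N -> \sum_(n <= j < m) u j <= e.
Proof.
move=> u0 cu e e0.
have nd : nondecreasing_seq (series u) by apply: nondecreasing_series => *; exact: u0.
have le := nondecreasing_cvgn_le nd cu.
have := (cvgrPdist_lt _ _).1 cu e e0.
move=> [N _ HN].
exists N => n m Nn.
have [nm|mn] := leqP n m; last by rewrite big_geq ?(ltnW mn) ?ltW.
rewrite -sub_series_geq //.
have := HN N (leqnn N); rewrite /= ger0_norm ?subr_ge0 ?le // => h.
have : series u N <= series u n by apply: nd.
have := le m. lra.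
Qed.
Lemma young (u v p : R) : 0 <= u -> 0 <= v -> 1 < p ->
  u * v <= u `^ p + v `^ (p / (p - 1)).
Proof.
move=> u0 v0 p1.
have p10 : 0 < p - 1 by lra.
have [vle|ltv] := leP v (u `^ (p - 1)).
  have : u * v <= u `^ p.
    have -> : p = 1 + (p - 1) by ring.
    have [->|un0] := eqVneq u 0; first by rewrite mul0r powR_ge0.
    rewrite powRD ?un0 ?implybT // powRr1 //.
    by apply: ler_wpM2l.
  have := powR_ge0 v (p / (p - 1)); lra.
have ip : 0 < (p - 1)^-1 by rewrite invr_gt0.
have : u <= v `^ (p - 1)^-1.
  have := @ge0_ler_powR R (p - 1)^-1 (ltW ip) (u `^ (p - 1)) v.
  rewrite !nnegrE powR_ge0 v0 -powRrM mulfV ?gt_eqF // powRr1 //.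
  by move=> /(_ isT isT (ltW ltv)).
move=> uv.
have : u * v <= v `^ (p / (p - 1)).
  have -> : p / (p - 1) = (p - 1)^-1 + 1 by field; exact: lt0r_neq0.
  have [->|vn0] := eqVneq v 0; first by rewrite mulr0 powR_ge0.
  rewrite powRD ?vn0 ?implybT // powRr1 //.
  by apply: ler_wpM2r.
have := powR_ge0 u p; lra.
Qed.

Lemma lnorm_fin_sum (r : R) (b : nat -> R) : 0 < r ->
  (lnorm r%:E b < +oo)%E -> (\sum_(0 <= j <oo) ((b j) `^ r)%:E < +oo)%E.
Proof.
move=> r0 /=; rewrite !ltey; apply: contra => /eqP ->.
by rewrite poweRyr // invr_eq0 gt_eqF.
Qed.

Lemma lnorm_le_partial (r M : R) (c : nat -> R) : 0 < r -> 0 < M ->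
  (lnorm r%:E c <= M%:E)%E -> forall m, \sum_(0 <= j < m) (c j) `^ r <= M `^ r.
Proof.
move=> r0 M0 /= H m.
have E0 : (0 <= \sum_(0 <= j <oo) ((c j) `^ r)%:E)%E.
  by apply: nneseries_ge0 => *; rewrite lee_fin powR_ge0.
have Pm : ((\sum_(0 <= j < m) (c j) `^ r)%:E <= \sum_(0 <= j <oo) ((c j) `^ r)%:E)%E.
  by rewrite -sumEFin; apply: nneseries_lim_ge => *; rewrite lee_fin powR_ge0.
move: E0 Pm H; case: (\sum_(0 <= j <oo) ((c j) `^ r)%:E)%E => [s| |] //.
- rewrite !lee_fin => s0 Ps sM.
  apply: (le_trans Ps).
  have -> : s = (s `^ r^-1) `^ r by rewrite -powRrM mulVf ?gt_eqF // powRr1.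
  by apply: (ge0_ler_powR (ltW r0)); rewrite // nnegrE ?powR_ge0 ?(ltW M0).
- by move=> _ _; rewrite poweRyr ?invr_eq0 ?gt_eqF.
Qed.

Lemma UT_fin (d : nat) (r M : R) (b : nat -> R) :
  (0 < d)%N -> d%:R < r -> 0 < M -> (forall j, 0 <= b j) ->
  (lnorm (conj_exp d r%:E)%:E b < +oo)%E ->
  forall e, 0 < e -> exists N, forall c : nat -> R, (forall j, 0 <= c j) ->
   (lnorm r%:E c <= M%:E)%E ->
   forall n m, (N <= n)%N -> \sum_(n <= j < m) b j * c j ^+ d <= e.
Proof.
move=> d0 dr M0 b0 Hb e e0.
have d0' : 0 < d%:R :> R by rewrite ltr0n.
have r0 : 0 < r by lra.
set p := r / (r - d%:R).
have rd0 : 0 < r - d%:R by lra.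
have p1 : 1 < p by rewrite /p ltr_pdivlMr // mul1r; lra.
have pp : p / (p - 1) = r / d%:R.
  rewrite /p; field; apply/andP; split; rewrite ?gt_eqF //.
set p' := r / d%:R.
have p'0 : 0 < p' by rewrite divr_gt0.
have Sb := @lnorm_fin_sum p b (lt_trans ltr01 p1) Hb.
have cb := nnseries_is_cvg (fun j => powR_ge0 (b j) p) Sb.
set eta := e / (2 * (M `^ r + 1)).
have eta0 : 0 < eta by rewrite divr_gt0 // mulr_gt0 // ltr_wpDl ?powR_ge0.
set lam := eta `^ p'^-1.
have lam0 : 0 < lam by rewrite powR_gt0.
have lamp : lam `^ p' = eta by rewrite -powRrM mulVf ?gt_eqF // powRr1 // ltW.
set kap := lam^-1 `^ p.
have kap0 : 0 < kap by rewrite powR_gt0 // invr_gt0.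
have ek : 0 < e / (2 * kap) by rewrite divr_gt0 // mulr_gt0.
have [N HN] := @tail_small (fun j => b j `^ p) (fun j => powR_ge0 (b j) p) cb _ ek.
exists N => c c0 Hc n m Nn.
have Hc' := @lnorm_le_partial r M c r0 M0 Hc.
have step : forall j, b j * c j ^+ d <= kap * b j `^ p + eta * c j `^ r.
  move=> j.
  have -> : b j * c j ^+ d = (b j * lam^-1) * (lam * c j ^+ d).
    by field; rewrite gt_eqF.
  have u0 : 0 <= b j * lam^-1 by rewrite mulr_ge0 // invr_ge0 ltW.
  have v0 : 0 <= lam * c j ^+ d by rewrite mulr_ge0 ?exprn_ge0 // ltW.
  apply: le_trans (young _ _ _ u0 v0 p1) _.
  rewrite pp powRM ?(powRM _ (ltW lam0)) ?exprn_ge0 ?invr_ge0 ?(ltW lam0) //.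
  rewrite -/p' lamp -powR_mulrn // -powRrM.
  have -> : d%:R * p' = r by rewrite /p'; field; rewrite gt_eqF.
  by rewrite [kap * _]mulrC.
apply: (le_trans (ler_sum _ (fun j _ => step j))).
rewrite big_split /= -!mulr_sumr.
have t1 := HN n m Nn.
have t2 : \sum_(n <= j < m) c j `^ r <= M `^ r.
  apply: le_trans (Hc' m).
  have [nm|mn] := leqP n m; last by rewrite big_geq ?(ltnW mn) ?sumr_ge0 // => *; rewrite powR_ge0.
  rewrite (@big_cat_nat _ _ _ n 0 m) //= lerDr sumr_ge0 // => *; exact: powR_ge0.
have : kap * \sum_(n <= i < m) b i `^ p <= e / 2.
  rewrite (le_trans (ler_wpM2l (ltW kap0) t1)) //.
  by rewrite le_eqVlt; apply/orP; left; apply/eqP; field; rewrite gt_eqF.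
have : eta * \sum_(n <= i < m) c i `^ r <= e / 2.
  rewrite (le_trans (ler_wpM2l (ltW eta0) t2)) // /eta.
  have Mr0 : 0 <= M `^ r by exact: powR_ge0.
  set X := M `^ r.
  have X1 : 0 < X + 1 by rewrite ltr_wpDl.
  have -> : e / (2 * (X + 1)) * X = e / 2 * (X / (X + 1)).
    by field; rewrite gt_eqF.
  rewrite -[leRHS]mulr1 ler_wpM2l ?divr_ge0 ?(ltW e0) //.
  rewrite ler_pdivrMr // mul1r; lra.
lra.
Qed.

Lemma UT_inf (d : nat) (M : R) (b : nat -> R) :
  0 < M -> (forall j, 0 <= b j) ->
  (lnorm (conj_exp d +oo%E)%:E b < +oo)%E ->
  forall e, 0 < e -> exists N, forall c : nat -> R, (forall j, 0 <= c j) ->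
   (lnorm +oo%E c <= M%:E)%E ->
   forall n m, (N <= n)%N -> \sum_(n <= j < m) b j * c j ^+ d <= e.
Proof.
move=> M0 b0 Hb e e0.
have Sb := @lnorm_fin_sum 1 b ltr01 Hb.
have cb := nnseries_is_cvg (fun j => powR_ge0 (b j) 1) Sb.
have Md0 : 0 < M ^+ d by rewrite exprn_gt0.
have ek : 0 < e / M ^+ d by rewrite divr_gt0.
have [N HN] := @tail_small (fun j => b j `^ 1) (fun j => powR_ge0 (b j) 1) cb _ ek.
exists N => c c0 Hc n m Nn.
have cM : forall j, c j ^+ d <= M ^+ d.
  move=> j; apply: lerXn2r; rewrite ?nnegrE ?c0 ?(ltW M0) //.
  rewrite -lee_fin; apply: le_trans Hc; apply: ereal_sup_ubound; by exists j.
apply: (@le_trans _ _ (\sum_(n <= j < m) b j * M ^+ d)).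
  by apply: ler_sum => j _; rewrite ler_wpM2l.
rewrite -mulr_suml.
have := HN n m Nn; under eq_bigr do rewrite powRr1 //.
by rewrite ler_pdivlMr.
Qed.

Lemma UT_all (d : nat) (q : \bar R) (M : R) (b : nat -> R) :
  (0 < d)%N -> (d%:R%:E < q)%E -> 0 < M -> (forall j, 0 <= b j) ->
  (lnorm (conj_exp d q)%:E b < +oo)%E ->
  forall e, 0 < e -> exists N, forall c : nat -> R, (forall j, 0 <= c j) ->
   (lnorm q c <= M%:E)%E ->
   forall n m, (N <= n)%N -> \sum_(n <= j < m) b j * c j ^+ d <= e.
Proof.
case: q => [r| |] // d0 dq M0 b0 Hb.
- by apply: UT_fin => //; rewrite -lte_fin.
- exact: UT_inf.
Qed.
End T.
Section Gen.
Variables (R : realType) (K : numFieldType) (nrm : K -> R).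
Hypotheses (nrmD : forall x y, nrm (x + y) <= nrm x + nrm y)
  (nrmN : forall x, nrm (- x) = nrm x) (nrm0 : nrm 0 = 0)
  (nrm_ge0 : forall x, 0 <= nrm x)
  (H3 : forall e : K, 0 < e -> exists2 dl : R, 0 < dl & forall z, nrm z < dl -> `|z| < e)
  (H4 : forall dl : R, 0 < dl -> exists2 e : K, 0 < e & forall z, `|z| < e -> nrm z < dl)
  (H5 : forall u : nat -> K, cvgn (series (fun j => nrm (u j))) -> cvgn (series u)).

Lemma nrm_sum (r : seq nat) (P : pred nat) (F : nat -> K) :
  nrm (\sum_(i <- r | P i) F i) <= \sum_(i <- r | P i) nrm (F i).
Proof.
apply: (big_ind2 (fun x y => nrm x <= y)).
- by rewrite nrm0.
- move=> x1 x2 y1 y2 h1 h2; apply: le_trans (nrmD _ _) _; exact: lerD.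
- by [].
Qed.

Lemma nrm_lim_le (s : nat -> K) (l : K) (B : R) : s @ \oo --> l ->
  (\forall n \near \oo, nrm (s n) <= B) -> nrm l <= B.
Proof.
move=> sl [N0 _ HN0]; apply/ler_addgt0Pr => dl dl0.
have [e e0 He] := H4 _ dl0.
have [N1 _ HN1] := (cvgrPdist_lt _ _).1 sl e e0.
set n := maxn N0 N1.
have h1 := HN0 n (leq_maxl _ _).
have h2 := He _ (HN1 n (leq_maxr _ _)).
have -> : l = (l - s n) + s n by ring.
apply: le_trans (nrmD _ _) _; rewrite addrC; apply: lerD => //; exact: ltW.
Qed.


Variables (a : nat -> K) (d : nat) (X : set {ptws nat -> K}).
Hypothesis UT : forall e : R, 0 < e -> exists N, forall y : {ptws nat -> K}, X y ->
  forall n m, (N <= n)%N -> \sum_(n <= j < m) nrm (a j * y j ^+ d) <= e.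

Lemma F1 (y : {ptws nat -> K}) : X y -> cvgn (series (fun j => a j * y j ^+ d)).
Proof.
move=> Xy; apply: H5.
set v := fun j => nrm (a j * y j ^+ d).
have v0 : forall j, 0 <= v j by move=> j; exact: nrm_ge0.
have nd : nondecreasing_seq (series v) by apply: nondecreasing_series => *; exact: v0.
apply: nondecreasing_is_cvgn => //.
have [N HN] := UT _ ltr01.
exists (series v N + 1) => _ [m _ <-].
have [Nm|mN] := leqP N m.
  rewrite /series /= (@big_cat_nat _ _ _ N 0 m) //=; apply: lerD => //.
  exact: HN Xy N m (leqnn N).
apply: le_trans (nd _ _ (ltnW mN)) _; rewrite lerDl; exact: ler01.
Qed.

Lemma F2 (e : R) : 0 < e -> exists N, forall y : {ptws nat -> K}, X y -> forall n, (N <= n)%N ->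
  nrm (fd d a y - series (fun j => a j * y j ^+ d) n) <= e.
Proof.
move=> e0; have [N HN] := UT _ e0; exists N => y Xy n Nn.
have cu := F1 y Xy.
apply: (@nrm_lim_le (fun m => series (fun j => a j * y j ^+ d) m - series (fun j => a j * y j ^+ d) n)).
  by apply: cvgB => //; exact: cvg_cst.
exists n => // m /= nm.
rewrite sub_series_geq //; apply: le_trans (nrm_sum _ _ _) _.
exact: HN.
Qed.

Lemma F3 (x : {ptws nat -> K}) (N : nat) :
  (fun y : {ptws nat -> K} => series (fun j => a j * y j ^+ d) N) @ x -->
    series (fun j => a j * x j ^+ d) N.
Proof.
elim: N => [|N IH].
  have -> : (fun y : {ptws nat -> K} => series (fun j => a j * y j ^+ d) 0) = fun=> 0.
    by apply: funext => y; rewrite /series /= big_geq.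
  have -> : series (fun j => a j * x j ^+ d) 0 = 0 by rewrite /series /= big_geq.
  exact: (@cvg_cst K 0 {ptws nat -> K} (nbhs x) _).
have -> : (fun y : {ptws nat -> K} => series (fun j => a j * y j ^+ d) N.+1) =
   (fun y => series (fun j => a j * y j ^+ d) N + a N * y N ^+ d).
  by apply: funext => y; rewrite seriesSr.
rewrite seriesSr.
apply: (@cvgD K K _ (nbhs x) _); first exact: IH.
apply: (@cvgMl_tmp K _ (nbhs x) _).
have pj : (fun y : {ptws nat -> K} => y N) @ x --> x N.
  exact: (@proj_continuous nat (fun=> K) N x).
elim: d => [|k IHk].
  have -> : (fun y : {ptws nat -> K} => y N ^+ 0) = fun=> 1.
    by apply: funext => y; rewrite expr0.
  rewrite expr0; exact: (@cvg_cst K 1 {ptws nat -> K} (nbhs x) _).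
have -> : (fun y : {ptws nat -> K} => y N ^+ k.+1) = (fun y => y N * y N ^+ k).
  by apply: funext => y; rewrite exprS.
rewrite exprS; exact: (@cvgM K _ (nbhs x) _).
Qed.

Lemma gen_cont : {within X, continuous (fd d a)}.
Proof.
apply/subspace_continuousP => x Xx.
apply/(@cvgrPdist_lt _ K _ (within X (nbhs x)) _) => e e0.
have [dl dl0 Hdl] := H3 _ e0.
have dl3 : 0 < dl / 3 by rewrite divr_gt0.
have [N HN] := F2 _ dl3.
have [e' e'0 He'] := H4 _ dl3.
have := (@cvgrPdist_lt _ K _ (nbhs x) _ _ _).1 (F3 x N) e' e'0.
move=> /(_ (@nbhs_filter _ x)).
rewrite /within; apply: filterS => y Hy Xy.
apply: Hdl.
have e1 := HN x Xx N (leqnn N).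
have e2 := HN y Xy N (leqnn N).
have e3 := He' _ Hy.
set Sx := series _ N in e1 e3; set Sy := series _ N in e2 e3.
rewrite /from_subspace.
have -> : fd d a x - fd d a y = (fd d a x - Sx) + ((Sx - Sy) + - (fd d a y - Sy)) by ring.
apply: le_lt_trans (nrmD _ _) _.
have := nrmD (Sx - Sy) (- (fd d a y - Sy)); rewrite nrmN => h.
lra.
Qed.
End Gen.

Lemma real_case (R : realType) (d : nat) (q : \bar R) (M : R) :
  (0 < d)%N -> (d%:R%:E < q)%E -> 0 < M ->
  (forall a : nat -> R,
     (lnorm (conj_exp d q)%:E (fun j => `|a j|%R) < +oo)%E ->
     {within Xqm (fun t : R => `|t|%R) q M, continuous (fd d a)}).
Proof.
move=> d0 dq M0 a Ha.
apply: (@gen_cont R R (fun t : R => `|t|)).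
- exact: ler_normD.
- exact: normrN.
- exact: normr0.
- exact: normr_ge0.
- by move=> e e0; exists e.
- by move=> e e0; exists e.
- by move=> u; apply: (@normed_cvg R R u).
- move=> e e0.
  have [N HN] := @UT_all R d q M (fun j => `|a j|) d0 dq M0 (fun j => normr_ge0 (a j)) Ha e e0.
  exists N => y Xy n m Nn.
  under eq_bigr do rewrite normrM normrX.
  exact: HN (fun j => normr_ge0 (y j)) Xy n m Nn.
Qed.

Section Cx.
Variable R : realType.
Import ComplexField Normc.

Lemma normC_def (z : Cplx R) : `|z| = ((cmod z)%:C)%C.
Proof. by case: z => x y; rewrite normc_def. Qed.

Lemma cmod_ge0 (z : Cplx R) : 0 <= cmod z.
Proof. by case: z => x y; rewrite /= sqrtr_ge0. Qed.

Lemma cmod_real (x : R) : cmod ((x%:C)%C) = `|x|.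
Proof. by rewrite /= expr0n /= addr0 sqrtr_sqr. Qed.

Lemma cmod_Re (z : Cplx R) : `|complex.Re z| <= cmod z.
Proof.
case: z => x y /=; rewrite -sqrtr_sqr; apply: ler_wsqrtr.
by rewrite lerDl sqr_ge0.
Qed.

Lemma cmod_Im (z : Cplx R) : `|complex.Im z| <= cmod z.
Proof.
case: z => x y /=; rewrite -sqrtr_sqr; apply: ler_wsqrtr.
by rewrite lerDr sqr_ge0.
Qed.

Lemma cmodX (z : Cplx R) n : cmod (z ^+ n) = cmod z ^+ n.
Proof.
elim: n => [|n IH]; first by rewrite !expr0 normc1.
by rewrite !exprS normcM IH.
Qed.

Lemma posC (e : Cplx R) : 0 < e -> 0 < complex.Re e /\ e = ((complex.Re e)%:C)%C.
Proof.
case: e => x y; rewrite ltcE /= => /andP[/eqP -> x0]; split => //.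
Qed.

Local Notation CC := (Num.NumField.sort (Cplx R : numFieldType)).
Lemma cvgC (s : nat -> R) (l : R) : s @ \oo --> l ->
  (fun n => ((s n)%:C)%C : CC) @ \oo --> ((l%:C)%C : CC).
Proof.
move=> sl; apply/(@cvgrPdist_lt _ CC _ \oo _) => e e0.
have [r0 ->] := @posC e e0.
have [N _ HN] := (cvgrPdist_lt _ _).1 sl _ r0.
exists N => // n /HN h.
by rewrite normC_def -rmorphB cmod_real ltcR.
Qed.

Lemma cvgn_real_of (u : nat -> Cplx R) (f : Cplx R -> R) :
  (forall z, `|f z| <= cmod z) ->
  cvgn (series (fun j => cmod (u j))) -> cvgn (series (fun j => f (u j))).
Proof.
move=> fb cu; apply: (@normed_cvg R R).
apply: (series_le_cvg _ _ _ cu) => n; rewrite ?normr_ge0 ?cmod_ge0 //; exact: fb.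
Qed.

Lemma H5C (u : nat -> CC) :
  cvgn (series (fun j => cmod (u j))) -> cvgn (series u).
Proof.
move=> cu.
have cr := @cvgn_real_of u _ cmod_Re cu.
have ci := @cvgn_real_of u _ cmod_Im cu.
have E : series u = fun n => ((series (fun j => complex.Re (u j)) n)%:C)%C + 'i%C * ((series (fun j => complex.Im (u j)) n)%:C)%C.
  apply: funext => n; rewrite [LHS]complexE /series /= !raddf_sum //.
rewrite E.
apply: cvgP.
apply: (@cvgD (Cplx R : numFieldType) CC _ \oo _).
  exact: cvgC cr.
apply: (@cvgMl_tmp (Cplx R : numFieldType) _ \oo _).
exact: cvgC ci.
Qed.
End Cx.

Lemma complex_case (R : realType) (d : nat) (q : \bar R) (M : R) :
  (0 < d)%N -> (d%:R%:E < q)%E -> 0 < M ->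
  (forall a : nat -> Cplx R,
     (lnorm (conj_exp d q)%:E (fun j => cmod (a j))%R < +oo)%E ->
     {within Xqm (fun z : Cplx R => cmod z) q M, continuous (fd d a)}).
Proof.
move=> d0 dq M0 a Ha.
apply: (@gen_cont R (Cplx R : numFieldType) (fun z => cmod z)).
- exact: le_normcD.
- exact: normcN.
- exact: ComplexField.Normc.normc0.
- exact: cmod_ge0.
- move=> e e0; have [r0 E] := @posC R e e0; exists (complex.Re e) => // z hz.
  by rewrite normC_def E ltcR.
- move=> dl dl0; exists ((dl%:C)%C); first by rewrite ltcR.
  by move=> z; rewrite normC_def ltcR.
- exact: H5C.
- move=> e e0.
  have [N HN] := @UT_all R d q M (fun j => cmod (a j)) d0 dq M0 (fun j => @cmod_ge0 R (a j)) Ha e e0.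
  exists N => y Xy n m Nn.
  under eq_bigr do rewrite ComplexField.Normc.normcM cmodX.
  exact: HN (fun j => @cmod_ge0 R (y j)) Xy n m Nn.
Qed.

Theorem lemma2 (R : realType) (d : nat) (q : \bar R) (M : R) :
  (0 < d)%N -> (d%:R%:E < q)%E -> 0 < M ->
  (* real case *)
  (forall a : nat -> R,
     (lnorm (conj_exp d q)%:E (fun j => `|a j|%R) < +oo)%E ->
     {within Xqm (fun t : R => `|t|%R) q M, continuous (fd d a)})
  /\
  (* complex case *)
  (forall a : nat -> Cplx R,
     (lnorm (conj_exp d q)%:E (fun j => cmod (a j))%R < +oo)%E ->
     {within Xqm (fun z : Cplx R => cmod z) q M, continuous (fd d a)}).
Proof.
move=> d0 dq M0; split; [exact: real_case | exact: complex_case].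
Qed.
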